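(* Let $\varepsilon>0$, $\delta\in(0,1)$, $\Delta>0$, and let $v$ be a real-valued function on datasets with sensitivity $\Delta$, i.e. $|v(D)-v(D')|\le\Delta$ for all neighboring datasets $D,D'$. Let $h:=\delta/(1+e^{\varepsilon})$ and let $q_h$ denote the absolute value of the $h$-quantile of the Laplace distribution $\mathrm{Lap}(\Delta/\varepsilon)$. Set $\tau:=q_h$. Consider the PositiveLaplaceMechanism which, on dataset $D$, samples $\eta\sim\mathrm{Lap}(\Delta/\varepsilon)$, sets $\tilde v:=v(D)+\tau+\eta$, and outputs $\max(v(D),\tilde v)$. Then this mechanism is $(\varepsilon,\delta)$-differentially private.
   Context: $\mathrm{Lap}(b)$ is the Laplace distribution with mean $0$ and scale $b$, with density $\frac{1}{2b}e^{-|x|/b}$. The $\phi$-quantile of a distribution is the value $x$ with $\Pr[X\le x]=\phi$. Two datasets are neighboring if they differ by replacing the contribution of one individual. A randomized algorithm $M$ is $(\varepsilon,\delta)$-differentially private if for every pair of neighboring datasets $D,D'$ and every measurable set $S$, $\Pr[M(D)\in S]\le e^{\varepsilon}\Pr[M(D')\in S]+\delta$ and symmetrically with $D,D'$ swapped. *)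

(* Defs.v *)
From HB Require Import structures.
From mathcomp Require Import all_boot all_order all_algebra.
From mathcomp Require Import all_classical all_reals all_analysis.
Set Implicit Arguments. Unset Strict Implicit. Unset Printing Implicit Defensive.
Import Order.TTheory GRing.Theory Num.Theory.
Local Open Scope classical_set_scope.
Local Open Scope ring_scope.

Definition laplace_pdf (R : realType) (b : R) (x : R) : R :=
  (2 * b)^-1 * expR (- `|x| / b).

Definition laplace_cdf (R : realType) (b : R) (x : R) : \bar R :=
  (\int[@lebesgue_measure R]_(t in `]-oo, x]) (laplace_pdf b t)%:E)%E.

Definition pos_laplace_prob (R : realType) (Dataset : Type) (v : Dataset -> R)
  (b tau : R) (D : Dataset) (S : set R) : \bar R :=
  (\int[@lebesgue_measure R]_(eta in setT)
     ((\1_S (Num.max (v D) (v D + tau + eta)) : R)%:E * (laplace_pdf b eta)%:E))%E.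

Definition is_DP (R : realType) (Dataset : Type) (neighbor : Dataset -> Dataset -> Prop)
  (P : Dataset -> set R -> \bar R) (eps delta : R) : Prop :=
  forall D D' : Dataset, neighbor D D' ->
  forall S : set R, measurable S ->
    (P D S <= (expR eps)%:E * P D' S + delta%:E)%E /\
    (P D' S <= (expR eps)%:E * P D S + delta%:E)%E.

(* Main.v *)
Require Import Defs.
From HB Require Import structures.
From mathcomp Require Import all_boot all_order all_algebra.
From mathcomp Require Import all_classical all_reals all_analysis.
From mathcomp Require Import measurable_realfun.
From mathcomp Require Import ring lra.
Import Order.TTheory GRing.Theory Num.Theory.
Local Open Scope classical_set_scope.
Local Open Scope ring_scope.

Section Shift.
Context {R : realType}.
Local Notation mu := (@lebesgue_measure R).
Definition shiftr (c : R) : measurableTypeR R -> measurableTypeR R := fun x => x + c.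

Lemma measurable_shiftr c : measurable_fun setT (shiftr c).
Proof.
have := @measurable_funD _ _ R setT id (cst c) (@measurable_id _ _ setT) (measurable_cst c).
by [].
Qed.

HB.instance Definition _ c := isMeasurableFun.Build _ _ _ _ (shiftr c) (measurable_shiftr c).

Lemma lebesgue_measure_shift c (A : set R) : measurable A ->
  pushforward mu (shiftr c) A = mu A.
Proof.
move=> mA; apply/esym/lebesgue_measure_unique => //= _ [[a b]] _ <-.
rewrite /pushforward.
have -> : shiftr c @^-1` `]a, b]%classic = `](a - c), (b - c)]%classic.
  by apply/seteqP; split => x /=; rewrite !in_itv /= /shiftr ltrBlDr lerBrDr.
rewrite !lebesgue_measure_itv/= !lte_fin ltrD2r.
by case: ifP => // _; rewrite -EFinD; congr EFin; ring.
Qed.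

Lemma ge0_integral_shift (c : R) (f : R -> \bar R) :
  measurable_fun setT f -> (forall x, (0 <= f x)%E) ->
  (\int[mu]_x f x = \int[mu]_x f (x + c)%R)%E.
Proof.
move=> mf f0.
have -> : (\int[mu]_x f (x + c)%R = \int[mu]_(x in shiftr c @^-1` setT) (f \o shiftr c) x)%E by [].
rewrite -(ge0_integral_pushforward (measurable_shiftr c) mu) //=.
- by apply: eq_measure_integral => //= A mA _; exact/esym/lebesgue_measure_shift.
Qed.
End Shift.

Section Main.
Context {R : realType}.
Local Notation mu := (@lebesgue_measure R).

Lemma pdf_ge0 (b x : R) : 0 < b -> 0 <= laplace_pdf b x.
Proof.
move=> b0; apply: mulr_ge0; last exact: expR_ge0.
rewrite invr_ge0; apply: mulr_ge0 => //; exact: ltW.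
Qed.

Lemma measurable_pdf (b : R) : measurable_fun setT (laplace_pdf b).
Proof.
have mG : measurable_fun setT (fun x : R => - `|x| / b).
  have := measurable_funM (measurable_funN (@normr_measurable R setT)) (@measurable_cst _ _ R R setT b^-1).
  by [].
have mF := measurableT_comp (@measurable_expR R) mG.
have := measurable_funM (@measurable_cst _ _ R R setT (2 * b)^-1) mF.
by [].
Qed.

Lemma pdf_shift (b x d : R) : 0 < b ->
  laplace_pdf b (x + d) <= expR (`|d| / b) * laplace_pdf b x.
Proof.
move=> b0; rewrite /laplace_pdf mulrCA; apply: ler_wpM2l.
  rewrite invr_ge0; apply: mulr_ge0 => //; exact: ltW.
rewrite -expRD ler_expR -mulrDl ler_pM2r ?invr_gt0 //.
have := ler_normD (x + d) (- d); rewrite addrK normrN; lra.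
Qed.


Lemma memI (x t : R) : (x \in `]-oo, t]%classic) = (x <= t).
Proof.
case h: (x <= t).
- by apply/mem_set => /=; rewrite in_itv /= h.
- by apply/negbTE/negP => /set_mem /=; rewrite in_itv /= h.
Qed.

Lemma memO (x t : R) : (x \in `]t, +oo[%classic) = (t < x).
Proof.
case h: (t < x).
- by apply/mem_set => /=; rewrite in_itv /= h.
- by apply/negbTE/negP => /set_mem /=; rewrite in_itv /= h.
Qed.

Lemma bool01 (b0 : bool) : 0 <= b0%:R :> R /\ b0%:R <= 1 :> R.
Proof. by case: b0 => /=; rewrite ?ler01 ?lexx. Qed.

Lemma L1 (S : set R) (tau a x : R) :
  (\1_S (Num.max a (a + tau + x)) : R) <=
  \1_(S `&` `]a, +oo[) (a + tau + x) + \1_(`]-oo, - tau]) x.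
Proof.
rewrite !indicE in_setI memI memO.
have [hx|hx] := leP x (- tau).
  have [h1 h2] := bool01 (Num.max a (a + tau + x) \in S).
  have [h3 h4] := bool01 ((a + tau + x \in S) && (a < a + tau + x)).
  by apply: ler_wpDl h3 _.
have ha : a < a + tau + x by lra.
rewrite max_r; last exact: ltW.
by rewrite ha andbT /= ?mulr0n addr0.
Qed.

Lemma L2 (S : set R) (tau a a0 x : R) :
  (\1_(S `&` `]a0, +oo[) (a + tau + x) : R) <=
  \1_S (Num.max a (a + tau + x)) + \1_(`]-oo, - tau]) x.
Proof.
rewrite !indicE in_setI memI memO.
have [hx|hx] := leP x (- tau).
  have [h1 h2] := bool01 (Num.max a (a + tau + x) \in S).
  have [h3 h4] := bool01 ((a + tau + x \in S) && (a0 < a + tau + x)).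
  by apply: ler_wpDl h1 _.
have ha : a < a + tau + x by lra.
rewrite max_r; last exact: ltW.
rewrite /= ?mulr0n addr0.
case: (_ \in S) => /=; last by [].
exact: (bool01 _).2.
Qed.

Lemma mind (b : R) (A : set R) (phi : R -> R) : measurable A -> measurable_fun setT phi ->
  measurable_fun setT (fun x => ((\1_A (phi x) : R) * laplace_pdf b x)%:E).
Proof.
move=> mA mphi; apply/measurable_EFinP.
have := measurable_funM (measurableT_comp (@measurable_indic _ _ R setT A mA) mphi) (measurable_pdf b).
by [].
Qed.

Lemma measurable_g (tau a : R) : measurable_fun setT (fun x : R => Num.max a (a + tau + x)).
Proof.
have m1 := @measurable_funD _ _ R setT (cst (a + tau)) id (measurable_cst _) (@measurable_id _ _ setT).
have := measurable_maxr (@measurable_cst _ _ R R setT a) m1.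
by [].
Qed.

Lemma intM (F G : R -> R) : (\int[mu]_(x in setT) ((F x)%:E * (G x)%:E) = \int[mu]_(x in setT) ((F x * G x)%:E))%E.
Proof. by apply: eq_integral => x _; rewrite EFinM. Qed.

Lemma key (b tau a a' : R) (S : set R) : 0 < b -> measurable S ->
  (\int[mu]_(x in setT) ((\1_S (Num.max a (a + tau + x)) : R)%:E * (laplace_pdf b x)%:E)
  <= (expR (`|a' - a| / b))%:E *
     (\int[mu]_(x in setT) ((\1_S (Num.max a' (a' + tau + x)) : R)%:E * (laplace_pdf b x)%:E)
      + \int[mu]_(x in setT) ((\1_(`]-oo, - tau]) x : R) * laplace_pdf b x)%:E)
   + \int[mu]_(x in setT) ((\1_(`]-oo, - tau]) x : R) * laplace_pdf b x)%:E)%E.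
Proof.
move=> b0 mS.
set f := laplace_pdf b.
set I := `]-oo, - tau]%classic.
have mI : measurable I by exact: measurable_itv.
have mS' : measurable (S `&` `]a, +oo[%classic) by apply: measurableI => //; exact: measurable_itv.
have f0 x : 0 <= f x by exact: pdf_ge0.
have i0 (A : set R) y : 0 <= (\1_A y : R) by rewrite indicE; have [] := bool01 (y \in A).
have mIf : measurable_fun setT (fun x => ((\1_I x : R) * f x)%:E) by exact: mind.
have mg a0 : measurable_fun setT (fun x => ((\1_S (Num.max a0 (a0 + tau + x)) : R) * f x)%:E).
  by apply: mind => //; exact: measurable_g.
set k := fun x => ((\1_(S `&` `]a, +oo[) (a + tau + x) : R) * f x).
have mk : measurable_fun setT (fun x => (k x)%:E).
  apply: mind => //.
  have := @measurable_funD _ _ R setT (cst (a + tau)) id (measurable_cst _) (@measurable_id _ _ setT).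
  by [].
rewrite (intM (fun x => \1_S (Num.max a (a + tau + x))) f) (intM (fun x => \1_S (Num.max a' (a' + tau + x))) f).
have kE0 x : setT x -> (0 <= (k x)%:E)%E by move=> _; rewrite lee_fin /k mulr_ge0.
have iE0 x : setT x -> (0 <= ((\1_I x : R) * f x)%:E)%E by move=> _; rewrite lee_fin mulr_ge0.
have gE0 a0 x : setT x -> (0 <= ((\1_S (Num.max a0 (a0 + tau + x)) : R) * f x)%:E)%E.
  by move=> _; rewrite lee_fin mulr_ge0.
have mkI : measurable_fun setT (fun x => ((k x)%:E + ((\1_I x : R) * f x)%:E)%E).
  by have := emeasurable_funD mk mIf.
have mgI : measurable_fun setT (fun x => (((\1_S (Num.max a' (a' + tau + x)) : R) * f x)%:E
     + ((\1_I x : R) * f x)%:E)%E).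
  by have := emeasurable_funD (mg a') mIf.
have gI0 x : setT x -> (0 <= (((\1_S (Num.max a' (a' + tau + x)) : R) * f x)%:E
     + ((\1_I x : R) * f x)%:E))%E.
  by move=> _; apply: adde_ge0; [exact: gE0|exact: iE0].
apply: (@le_trans _ _ (\int[mu]_(x in setT) ((k x)%:E + ((\1_I x : R) * f x)%:E))%E).
  apply: (ge0_le_integral mu measurableT (gE0 a) (mg a) mkI).
  move=> x _; rewrite -EFinD lee_fin /k -mulrDl; apply: ler_wpM2r => //; exact: L1.
rewrite (ge0_integralD mu measurableT kE0 mk iE0 mIf).
apply: leeD2r.
rewrite (@ge0_integral_shift R (a' - a) _ mk); last by move=> x; apply: kE0.
rewrite -(ge0_integralD mu measurableT (gE0 a') (mg a') iE0 mIf).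
rewrite -(ge0_integralZl_EFin mu measurableT gI0 mgI (expR_ge0 _)).
apply: (ge0_le_integral mu measurableT).
- by move=> x _; apply: kE0.
- exact: (measurableT_comp mk (measurable_shiftr (a' - a))).
- by have := emeasurable_funM (@measurable_cst _ _ _ _ setT (expR (`|a' - a| / b))%:E) mgI.
move=> x _; rewrite -EFinD -EFinM lee_fin /k.
have -> : a + tau + (x + (a' - a)) = a' + tau + x by ring.
apply: le_trans (ler_wpM2l (i0 _ _) (@pdf_shift b x (a' - a) b0)) _.
rewrite mulrCA; apply: ler_wpM2l; first exact: expR_ge0.
rewrite -mulrDl; apply: ler_wpM2r => //; exact: L2.
Qed.

End Main.

Theorem theorem3p1 (R : realType) (Dataset : Type)
  (neighbor : Dataset -> Dataset -> Prop) (v : Dataset -> R)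
  (eps delta Delta : R) (heps : 0 < eps) (hdelta0 : 0 < delta) (hdelta1 : delta < 1)
  (hDelta : 0 < Delta)
  (hsens : forall D D', neighbor D D' -> `|v D - v D'| <= Delta)
  (h : R) (hh : h = delta / (1 + expR eps))
  (qx : R) (hqx : laplace_cdf (Delta / eps) qx = h%:E)
  (tau : R) (htau : tau = `|qx|) :
  is_DP neighbor (pos_laplace_prob v (Delta / eps) tau) eps delta.
Proof.
rewrite /is_DP /pos_laplace_prob.
set b := Delta / eps.
have b0 : 0 < b by exact: divr_gt0.
set f := laplace_pdf b.
have f0 x : 0 <= f x by exact: pdf_ge0.
set I := `]-oo, - tau]%classic.
have mI : measurable I by exact: measurable_itv.
have h0 : 0 <= h by rewrite hh divr_ge0 // ?ltW // addr_ge0 // expR_ge0.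
have HH0 : (0 <= \int[lebesgue_measure]_(x in setT) ((\1_I x : R) * f x)%:E)%E.
  apply: integral_ge0 => x _; rewrite lee_fin mulr_ge0 //.
have Hh : (\int[lebesgue_measure]_(x in setT) ((\1_I x : R) * f x)%:E <= h%:E)%E.
  rewrite -hqx /laplace_cdf.
  have -> : (\int[lebesgue_measure]_(x in setT) ((\1_I x : R) * f x)%:E =
             \int[lebesgue_measure]_(x in I) (f x)%:E)%E.
    rewrite [RHS]integral_mkcond; apply: eq_integral => x _.
    rewrite patchE indicE; case: (x \in I) => /=; rewrite ?mul1r ?mul0r //.
  apply: (ge0_subset_integral lebesgue_measure mI (measurable_itv _)).
  - apply/measurable_EFinP; apply: measurable_funTS; exact: measurable_pdf.
  - by move=> x _; rewrite lee_fin.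
  - move=> x; rewrite /I /= in_itv /= => hx.
    apply: le_trans hx _; have := ler_norm (- qx); rewrite normrN htau; lra.
move=> D D' nDD' S mS.
have one a a' : `|a' - a| <= Delta ->
  (\int[lebesgue_measure]_(x in setT) ((\1_S (Num.max a (a + tau + x)) : R)%:E * (f x)%:E)
   <= (expR eps)%:E * \int[lebesgue_measure]_(x in setT) ((\1_S (Num.max a' (a' + tau + x)) : R)%:E * (f x)%:E) + delta%:E)%E.
  move=> hd.
  apply: le_trans (@key R b tau a a' S b0 mS) _.
  set P' := (\int[lebesgue_measure]_(x in setT) _)%E.
  set H := (\int[lebesgue_measure]_(x in setT) ((\1_I x : R) * f x)%:E)%E.
  have P0 : (0 <= P')%E.
    apply: integral_ge0 => x _; rewrite -EFinM lee_fin mulr_ge0 //.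
  have hc : expR (`|a' - a| / b) <= expR eps.
    rewrite ler_expR ler_pdivrMr // /b mulrCA divff ?mulr1 //.
    by apply: lt0r_neq0.
  apply: (@le_trans _ _ ((expR eps)%:E * (P' + h%:E) + h%:E)%E).
    apply: leeD => //; apply: lee_pmul.
    all: try by rewrite lee_fin ?expR_ge0.
    all: try exact: adde_ge0.
    all: try exact: leeD2l.
  rewrite ge0_muleDr // -addeA -EFinM -EFinD.
  have -> : expR eps * h + h = delta.
    rewrite hh; field.
    by apply: lt0r_neq0; rewrite addr_gt0 // expR_gt0.
  by [].
split.
- apply: one; by rewrite distrC hsens.
- apply: one; by rewrite hsens.
Qed.
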